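(* Let $n\ge1$, $1\le d\le n$, and let $\overline{\mathsf{Del}}(n,d)$ be the LP: maximize $\sum_{\mathbf{x}\in\{0,1\}^n}f(\mathbf{x})$ over $f:\{0,1\}^n\to\mathbb{R}$ subject to $f(\mathbf{x})\ge0$ for all $\mathbf{x}$; $\widehat f(\mathbf{s})\ge0$ for all $\mathbf{s}$; $f(\mathbf{x})=0$ whenever $1\le w(\mathbf{x})\le d-1$; and $f(0^n)\le\mathrm{OPT}(\mathsf{Del}(n,d))$. Then every optimal solution of $\overline{\mathsf{Del}}(n,d)$ satisfies $f(0^n)=\mathrm{OPT}(\mathsf{Del}(n,d))$, and $\mathrm{OPT}(\overline{\mathsf{Del}}(n,d))=\big(\mathrm{OPT}(\mathsf{Del}(n,d))\big)^2$.
   Context: Fourier transform: $\widehat{f}(\mathbf{s})=2^{-n}\sum_{\mathbf{x}\in\{0,1\}^n}f(\mathbf{x})(-1)^{\mathbf{x}\cdot\mathbf{s}}$. $w(\mathbf{x})$ is Hamming weight. $\mathrm{OPT}$ denotes the optimal value of an LP. $\mathsf{Del}(n,d)$: maximize $\sum_{\mathbf{x}}f(\mathbf{x})$ over $f:\{0,1\}^n\to\mathbb{R}$ subject to $f\ge0$, $\widehat f\ge0$, $f(\mathbf{x})=0$ whenever $1\le w(\mathbf{x})\le d-1$, $f(0^n)=1$. *)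

(* Defs.v *)
From HB Require Import structures.
From mathcomp Require Import all_boot all_order all_algebra.
From mathcomp Require Import classical_sets reals.
Set Implicit Arguments. Unset Strict Implicit. Unset Printing Implicit Defensive.
Import Order.TTheory GRing.Theory Num.Theory.
Local Open Scope ring_scope.
Local Open Scope classical_set_scope.

Definition cube (n : nat) := {ffun 'I_n -> bool}.

Definition zeroPt (n : nat) : cube n := [ffun _ => false].

Definition wt (n : nat) (x : cube n) : nat := \sum_(i < n) (x i : nat).

(* inner product x . s over the integers (only its parity matters) *)
Definition dotp (n : nat) (x s : cube n) : nat := \sum_(i < n) ((x i && s i) : nat).

Section Del.
Variable R : realType.

Definition fourier (n : nat) (f : cube n -> R) (s : cube n) : R :=
  (2%:R ^+ n)^-1 * \sum_(x : cube n) f x * (-1) ^+ (dotp x s).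

Definition objective (n : nat) (f : cube n -> R) : R := \sum_(x : cube n) f x.

Definition del_common (n d : nat) (f : cube n -> R) : Prop :=
  (forall x, 0 <= f x) /\
  (forall s, 0 <= fourier f s) /\
  (forall x, (1 <= wt x <= d - 1)%N -> f x = 0).

Definition Del_feasible (n d : nat) (f : cube n -> R) : Prop :=
  del_common d f /\ f (zeroPt n) = 1.

Definition OPT_Del (n d : nat) : R :=
  sup [set objective f | f in [set f : cube n -> R | Del_feasible d f]].

Definition DelBar_feasible (n d : nat) (f : cube n -> R) : Prop :=
  del_common d f /\ f (zeroPt n) <= OPT_Del n d.

Definition OPT_DelBar (n d : nat) : R :=
  sup [set objective f | f in [set f : cube n -> R | DelBar_feasible d f]].

Definition DelBar_optimal (n d : nat) (f : cube n -> R) : Prop :=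
  DelBar_feasible d f /\ (forall g : cube n -> R, DelBar_feasible d g -> objective g <= objective f).

End Del.

(* Main.v *)
Require Import Defs.
From HB Require Import structures.
From mathcomp Require Import all_boot all_order all_algebra.
From mathcomp Require Import classical_sets reals.
Import Order.TTheory GRing.Theory Num.Theory.
Local Open Scope ring_scope.

Section S.
Variable R : realType.
Variable n : nat.

Definition flip (i : 'I_n) (s : cube n) : cube n := [ffun j => if j == i then ~~ s j else s j].

Lemma flipK i : involutive (flip i).
Proof. by move=> s; apply/ffunP => j; rewrite !ffunE; case: eqP => // _; rewrite negbK. Qed.

Lemma dotp_flip (x s : cube n) i : x i -> odd (dotp x s + dotp x (flip i s)).
Proof.
move=> xi; rewrite /dotp (bigD1 i) //= [X in (_ + X)%N](bigD1 i) //= ffunE eqxx xi /=.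
rewrite [X in (_ + (_ + X))%N](eq_bigr (fun j => (x j && s j) : nat)); last first.
  by move=> j /negbTE ji; rewrite ffunE ji.
set t := \sum_(_ < _ | _) _.
case: (s i) => /=. 
- by rewrite !add0n addnn odd_double.
- by rewrite !add0n add1n addnS addnn /= odd_double.
Qed.

Lemma char_sum (x : cube n) : \sum_(s : cube n) (-1) ^+ (dotp x s) = (x == zeroPt n)%:R * (2%:R ^+ n) :> R.
Proof.
have [->|nz] := eqVneq x (zeroPt n).
  rewrite mul1r (eq_bigr (fun _ => 1)); last first.
    by move=> s _; rewrite /dotp big1 // => i _; rewrite ffunE.
  by rewrite sumr_const card_ffun card_bool card_ord -natrX.
have [i xi] : exists i, x i.
  apply/existsP; apply: contraR nz; rewrite negb_exists => /forallP h.
  by apply/eqP/ffunP => j; rewrite ffunE; apply/negbTE/h.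
rewrite mul0r; set S := \sum_s _.
have : S = - S.
  rewrite {1}/S (reindex_inj (inv_inj (flipK i))) -sumrN; apply: eq_bigr => s _.
  have h := @dotp_flip x s i xi.
  move: h; move: (dotp x s) (dotp x (flip i s)) => a b.
  rewrite -(signr_odd _ a) -(signr_odd _ b) oddD.
  by case: (odd a); case: (odd b) => //= _; rewrite ?expr1 ?expr0 ?opprK.
by move/eqP; rewrite -addr_eq0 -mulr2n mulrn_eq0 /= => /eqP.
Qed.

Lemma two_n_gt0 : 0 < (2%:R ^+ n : R).
Proof. by rewrite exprn_gt0 // ltr0n. Qed.

Lemma fourier_inv (f : cube n -> R) : \sum_s fourier f s = f (zeroPt n).
Proof.
rewrite /fourier -mulr_sumr exchange_big /=.
under eq_bigr => x _ do rewrite -mulr_sumr char_sum.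
rewrite (bigD1 (zeroPt n)) //= eqxx big1 => [|x /negbTE ->]; last by rewrite mul0r mulr0.
rewrite addr0 mul1r mulrCA mulVf ?mulr1 //; exact: lt0r_neq0 two_n_gt0.
Qed.

Lemma dotp0 (x : cube n) : dotp x (zeroPt n) = 0%N.
Proof. by rewrite /dotp big1 // => i _; rewrite ffunE andbF. Qed.

Lemma obj_le2n d (f : cube n -> R) : del_common d f -> objective f <= 2%:R ^+ n * f (zeroPt n).
Proof.
move=> [f0 [hf _]].
have -> : objective f = 2%:R ^+ n * fourier f (zeroPt n).
  rewrite /fourier mulrA mulfV ?mul1r; last exact: lt0r_neq0 two_n_gt0.
  by apply: eq_bigr => x _; rewrite dotp0 expr0 mulr1.
rewrite ler_pM2l ?two_n_gt0 // -(fourier_inv f) (bigD1 (zeroPt n)) //= lerDl.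
by apply: sumr_ge0 => s _.
Qed.

Lemma common_scale d (f : cube n -> R) c : 0 <= c -> del_common d f ->
  del_common d (fun x => c * f x).
Proof.
move=> c0 [f0 [hf hw]]; split; [|split].
- by move=> x; rewrite mulr_ge0.
- move=> s; have -> : fourier (fun x => c * f x) s = c * fourier f s.
    rewrite /fourier !mulr_sumr; apply: eq_bigr => x _.
    by rewrite !mulrA [_^-1 * c]mulrC.
  by rewrite mulr_ge0.
- by move=> x /hw ->; rewrite mulr0.
Qed.

Lemma obj_scale (f : cube n -> R) c : objective (fun x => c * f x) = c * objective f.
Proof. by rewrite /objective mulr_sumr. Qed.

Local Open Scope classical_set_scope.

Definition delta : cube n -> R := fun x => if x == zeroPt n then 1 else 0.

Lemma wt0 : wt (zeroPt n) = 0%N.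
Proof. by rewrite /wt big1 // => i _; rewrite ffunE. Qed.

Lemma delta_feas d : Del_feasible d delta.
Proof.
split; last by rewrite /delta eqxx.
split; [|split].
- by move=> x; rewrite /delta; case: eqP.
- move=> s; rewrite /fourier; apply: mulr_ge0; first by rewrite invr_ge0 ltW // two_n_gt0.
  apply: sumr_ge0 => x _; rewrite /delta; case: eqP => [->|]; last by rewrite mul0r.
  by rewrite /dotp big1 ?mul1r ?expr0 // => i _; rewrite ffunE.
- move=> x; rewrite /delta; case: eqP => // -> .
  by rewrite wt0.
Qed.

Lemma obj_delta : objective delta = 1.
Proof.
rewrite /objective (bigD1 (zeroPt n)) //= big1 ?addr0 /delta ?eqxx //.
by move=> x /negbTE ->.
Qed.

Variable d : nat.
Let Sd := [set objective f | f in [set f : cube n -> R | Del_feasible d f]].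
Let M := OPT_Del R n d.

Lemma Sd_sup : has_sup Sd.
Proof.
split; first by exists 1, delta; [exact: delta_feas | exact: obj_delta].
exists (2%:R ^+ n) => y [f [fc f0] <-].
by have := @obj_le2n _ _ fc; rewrite f0 mulr1.
Qed.

Lemma M_ge1 : 1 <= M.
Proof.
have [_ ub] := Sd_sup.
by apply: (ub_le_sup ub); exists delta; [exact: delta_feas | exact: obj_delta].
Qed.

Lemma obj_leM (f : cube n -> R) : del_common d f -> objective f <= f (zeroPt n) * M.
Proof.
move=> fc; have f0 : 0 <= f (zeroPt n) by case: fc.
have [e|nz] := eqVneq (f (zeroPt n)) 0.
  by have := @obj_le2n _ _ fc; rewrite e mulr0 mul0r.
have cp : 0 < f (zeroPt n) by rewrite lt0r nz.
set c := f (zeroPt n) in f0 nz cp *.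
have gf : Del_feasible d (fun x => c^-1 * f x).
  split; first by apply: common_scale => //; rewrite invr_ge0.
  by rewrite mulVf.
have : objective (fun x => c^-1 * f x) <= M.
  have [_ ub] := Sd_sup; apply: (ub_le_sup ub); by exists (fun x => c^-1 * f x).
rewrite obj_scale -(ler_pM2l cp) mulrA mulfV // mul1r.
by [].
Qed.

End S.

Local Open Scope classical_set_scope.
Theorem mainTheorem5 (R : realType) (n d : nat) :
  (1 <= n)%N -> (1 <= d <= n)%N ->
  (forall f : cube n -> R, DelBar_optimal d f -> f (zeroPt n) = OPT_Del R n d) /\
  OPT_DelBar R n d = (OPT_Del R n d) ^+ 2.
Proof.
move=> _ _.
set M := OPT_Del R n d.
have M1 := @M_ge1 R n d; rewrite -/M in M1.
have M0 : 0 < M by apply: lt_le_trans M1.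
set Sb := [set objective f | f in [set f : cube n -> R | DelBar_feasible d f]].
have Sb_ub : forall y, Sb y -> y <= M ^+ 2.
  move=> y [f [fc fM] <-]; apply: le_trans (@obj_leM _ _ _ _ fc) _.
  by rewrite -/M expr2 ler_pM2r.
have Sb_sup : has_sup Sb.
  split; last by exists (M ^+ 2).
  exists 0; exists (fun _ => 0); last by rewrite /objective big1.
  split; last by rewrite ltW.
  by split; [|split] => // s; rewrite /fourier big1 ?mulr0 // => x _; rewrite mul0r.
have opt : OPT_DelBar R n d = M ^+ 2.
  apply/eqP; rewrite eq_le; apply/andP; split; first by apply: ge_sup; case: Sb_sup.
  rewrite leNgt; apply/negP => lt.
  have : OPT_DelBar R n d / M < OPT_Del R n d.
    by rewrite ltr_pdivrMr // -expr2.
  case/sup_gt; first by case: (@Sd_sup R n d).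
  move=> y [g [gc g0] <-] lty.
  have : objective (fun x => M * g x) <= OPT_DelBar R n d.
    apply: (ub_le_sup (proj2 Sb_sup)); exists (fun x => M * g x) => //.
    split; first by apply: common_scale => //; rewrite ltW.
    by rewrite g0 mulr1.
  by rewrite obj_scale leNgt mulrC -ltr_pdivrMr // lty.
split=> // f [ff fopt].
have h1 : M ^+ 2 <= objective f.
  rewrite -opt; apply: ge_sup; first by case: Sb_sup.
  by move=> y [g gf <-]; apply: fopt.
have h2 := @obj_leM _ _ _ _ (proj1 ff); rewrite -/M in h2.
apply/eqP; rewrite eq_le; apply/andP; split; first by case: ff.
by rewrite -(ler_pM2r M0) -expr2 (le_trans h1 h2).
Qed.
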